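(* Write \[ \frac{2q J_{10}^6}{J_{2,10}^2 J_{3,10}^2} = \sum_{n\ge 1} b'(n) q^n . \] Then $b'(n) \ge 2\lfloor (n-1)/6 \rfloor$ for all $n \ge 1$.
   Context: Notation: $(a;q)_\infty = \prod_{i\ge 0}(1-aq^i)$ and $(a_1,\dots,a_k;q)_\infty = (a_1;q)_\infty\cdots(a_k;q)_\infty$. For positive integers $a<b$: $J_b = (q^b;q^b)_\infty$ and $J_{a,b} = (q^a, q^{b-a}, q^b; q^b)_\infty$. *)

(* Defs.v *)
(* q-series with integer coefficients, handled through
   exact polynomial truncations. *)
From HB Require Import structures.
From mathcomp Require Import all_boot all_order all_algebra.
Set Implicit Arguments. Unset Strict Implicit. Unset Printing Implicit Defensive.
Import Order.TTheory GRing.Theory Num.Theory.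
Local Open Scope ring_scope.

(* Finite truncation of (q^a; q^b)_oo : prod_{i < N} (1 - q^(a + b i)).
   For a, b >= 1 it agrees with (q^a;q^b)_oo modulo q^N. *)
Definition poch_tr (N a b : nat) : {poly int} :=
  \prod_(i < N) (1 - 'X^(a + b * i)).

(* Finite truncation of 1/(q^a; q^b)_oo, expanding each factor
   1/(1 - q^e) = sum_{j>=0} q^(e j); agrees with 1/(q^a;q^b)_oo
   modulo q^N when a, b >= 1. *)
Definition poch_inv_tr (N a b : nat) : {poly int} :=
  \prod_(i < N) \sum_(j < N) 'X^((a + b * i) * j).

Definition J_tr (N b : nat) : {poly int} := poch_tr N b b.

Definition Jab_inv_tr (N a b : nat) : {poly int} :=
  poch_inv_tr N a b * poch_inv_tr N (b - a) b * poch_inv_tr N b b.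

(* b'(n) := coefficient of q^n in 2 q J_10^6 / (J_{2,10}^2 J_{3,10}^2).
   Using n+1 factors / terms is exact for the coefficient of q^n. *)
Definition bprime (n : nat) : int :=
  (2%:P * 'X * J_tr n.+1 10 ^+ 6
     * Jab_inv_tr n.+1 2 10 ^+ 2 * Jab_inv_tr n.+1 3 10 ^+ 2)`_n.

(* Main.v *)
Require Import Defs.
From HB Require Import structures.
From mathcomp Require Import all_boot all_order all_algebra.
From mathcomp Require Import ring zify.
Import Order.TTheory GRing.Theory Num.Theory.
Local Open Scope ring_scope.

Section Aux.
Variable N : nat.
Hypothesis N0 : (0 < N)%N.

Definition nn (F : {poly int}) := forall i, (i < N)%N -> 0 <= F`_i.
Definition good (F : {poly int}) := F`_0 = 1 /\ nn F.
Definition lowz (F : {poly int}) := forall i, (i < N)%N -> F`_i = 0.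

Lemma nnD F G : nn F -> nn G -> nn (F + G).
Proof. by move=> hF hG i hi; rewrite coefD addr_ge0 ?hF ?hG. Qed.

Lemma nnM F G : nn F -> nn G -> nn (F * G).
Proof.
move=> hF hG i hi; rewrite coefM sumr_ge0 // => j _.
rewrite mulr_ge0 ?hF ?hG //; first by apply: leq_ltn_trans hi; rewrite -ltnS.
by apply: leq_ltn_trans hi; rewrite leq_subr.
Qed.

Lemma goodM F G : good F -> good G -> good (F * G).
Proof.
case=> h0 h1 [g0 g1]; split; last exact: nnM.
by rewrite coef0M h0 g0 mulr1.
Qed.

Lemma good1 : good 1.
Proof. split; first by rewrite coef1. by move=> i _; rewrite coef1; case: (i == 0%N). Qed.

Lemma goodX F k : good F -> good (F ^+ k).
Proof. move=> h; elim: k => [|k IH]; first exact: good1. by rewrite exprS; apply: goodM. Qed.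

Lemma good_prod (I : Type) (r : seq I) (P : pred I) (F : I -> {poly int}) :
  (forall i, P i -> good (F i)) -> good (\prod_(i <- r | P i) F i).
Proof. move=> h; apply: (big_ind good) => //; [exact: good1| exact: goodM]. Qed.

Lemma goodB F H : good F -> lowz H -> good (F - H).
Proof.
case=> h0 h1 hH; split; first by rewrite coefB h0 hH // subr0.
by move=> i hi; rewrite coefB hH // subr0 h1.
Qed.

Lemma lowzXn k F : (N <= k)%N -> lowz ('X^k * F).
Proof. move=> hk i hi; rewrite coefXnM; have -> : (i < k)%N by apply: leq_trans hk. done. Qed.

Definition S (e : nat) : {poly int} := \sum_(j < N) 'X^(e * j).

Lemma S_geo e : S e = \sum_(j < N) ('X^e) ^+ j.
Proof. by apply: eq_bigr => j _; rewrite exprM. Qed.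

Lemma geo (x : {poly int}) : (1 - x) * \sum_(j < N) x ^+ j = 1 - x ^+ N.
Proof. have := subrX1 x N => h. have : -(x ^+ N - 1) = - ((x - 1) * \sum_(i < N) x ^+ i) by rewrite h.
move=> h2; rewrite -[LHS]opprK -mulNr opprB -h2 opprB //. Qed.

Lemma S_nn e : nn (S e).
Proof. by move=> i _; rewrite coef_sum sumr_ge0 // => j _; rewrite coefXn ler0n. Qed.

Lemma S_good e : (0 < e)%N -> good (S e).
Proof.
move=> he; split; last exact: S_nn.
rewrite coef_sum; case: N N0 => // K _.
rewrite big_ord_recl /= coefXn muln0 eqxx big1 ?addr0 // => j _.
rewrite coefXn. have -> : (0 == e * (bump 0 j))%N = false by apply/negbTE; rewrite eq_sym muln_eq0; apply/norP; split; rewrite -lt0n. done.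
Qed.

Lemma XS_nn e : nn ('X^e * S e).
Proof. move=> i hi; rewrite coefXnM; case: ifP => // _; apply: S_nn; apply: leq_ltn_trans hi; exact: leq_subr. Qed.

Lemma T_good a b : (0 < a)%N -> (0 < b)%N -> good ((1 - 'X^(a + b)) * (S a * S b)).
Proof.
move=> ha hb.
have e : (1 - 'X^(a + b)) * (S a * S b) =
   (S b + 'X^a * S a) - ('X^(a * N) * S b + 'X^(a + b * N) * S a).
  rewrite !S_geo.
  have ga := geo ('X^a); have gb := geo ('X^b).
  set A := \sum_(j < N) _ in ga *. set B := \sum_(j < N) _ in gb *.
  rewrite exprD exprM exprD exprM.
  have -> : (1 - 'X^a * 'X^b) * (A * B) = ((1 - 'X^a) * A) * B + 'X^a * (((1 - 'X^b) * B) * A) by ring.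
  rewrite ga gb; ring.
rewrite e; apply: goodB.
  split; first by rewrite coefD coefXnM ha addr0; case: (S_good _ hb).
  by apply: nnD; [exact: S_nn | exact: XS_nn].
move=> i hi; rewrite coefD !coefXnM.
have -> : (i < a * N)%N by apply: (leq_trans hi); rewrite leq_pmull.
have -> : (i < a + b * N)%N by apply: (leq_trans hi); rewrite (leq_trans _ (leq_addl _ _)) // leq_pmull.
by rewrite addr0.
Qed.

Lemma W_good e : (0 < e)%N -> good (1 - 'X^(e * N)).
Proof.
move=> he; rewrite -[X in _ - X]mulr1; apply: goodB; first exact: good1.
by apply: lowzXn; rewrite leq_pmull.
Qed.

End Aux.

Lemma merge_prod (R : comNzRingType) (F : nat -> R) r K :
  \prod_(i < K) F (r + 10 * i)%N * \prod_(i < K) F (r + 5 + 10 * i)%N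
  = \prod_(j < K.*2) F (r + 5 * j)%N.
Proof.
elim: K => [|K IH]; first by rewrite !big_ord0 mulr1.
rewrite doubleS !big_ord_recr /= -IH.
have -> : (r + 5 * K.*2 = r + 10 * K)%N by rewrite -muln2; lia.
have -> : (r + 5 * K.*2.+1 = r + 5 + 10 * K)%N by rewrite -muln2; lia.
ring.
Qed.

Lemma split_a (R : comNzRingType) (F : nat -> R) K :
  \prod_(j < K.*2) F j = \prod_(j < K) F j * \prod_(K <= j < K.*2) F j.
Proof.
rewrite -(big_mkord (fun _ => true) F) -(big_mkord (fun _ => true) F).
rewrite (big_cat_nat _ (n := K)) //; rewrite -addnn leq_addr //.
Qed.

Lemma split_b (R : comNzRingType) (F : nat -> R) K : (0 < K)%N ->
  \prod_(j < K.*2) F j = F 0%N * \prod_(j < K) F j.+1 * \prod_(K <= j < K.*2.-1) F j.+1.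
Proof.
move=> hK; rewrite -(big_mkord (fun _ => true) F) -(big_mkord (fun _ => true) (fun j => F j.+1)).
have -> : K.*2 = (K.*2.-1).+1 by rewrite prednK // double_gt0.
rewrite big_nat_recl // (big_cat_nat _ (n := K)) //=; first by rewrite mulrA.
by rewrite -addnn; lia.
Qed.

Lemma SS_coef N a b m :
  (S N a * S N b)`_m = \sum_(j < N) \sum_(i < N) ((m == a * i + b * j)%N)%:R.
Proof.
rewrite /S big_distrl /= coef_sum.
rewrite (eq_bigr (fun i : 'I_N => \sum_(j < N) ((m == a * i + b * j)%N)%:R)) => [|i _].
  by rewrite exchange_big.
rewrite big_distrr coef_sum; apply: eq_bigr => j _.
by rewrite /= -exprD coefXn.
Qed.

Lemma S23_bound N m : (m < N)%N -> ((m %/ 6)%N)%:Z <= (S N 2 * S N 3)`_m.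
Proof.
move=> hm; rewrite SS_coef.
pose g (j : nat) : int := ((3 * j <= m) && ~~ odd (m - 3 * j))%N%:R.
have h1 : forall j : 'I_N, g j <= \sum_(i < N) ((m == 2 * i + 3 * j)%N)%:R.
  move=> j; rewrite /g; case hc : ((3 * j <= m)%N && ~~ odd (m - 3 * j)); last first.
    by rewrite sumr_ge0 // => i _; rewrite ler0n.
  move/andP: hc => [hj hod].
  have hd := odd_double_half (m - 3 * j); rewrite (negbTE hod) add0n -muln2 in hd.
  have hi : ((m - 3 * j)./2 < N)%N by lia.
  rewrite (bigD1 (Ordinal hi)) //=.
  have -> : (m == 2 * (m - 3 * j)./2 + 3 * j)%N by apply/eqP; lia.
  by rewrite lerDl sumr_ge0 // => i _; rewrite ler0n.
apply: (le_trans _ (ler_sum _ (fun j _ => h1 j))).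
set t := (m %/ 6)%N.
have ht : (6 * t <= m)%N by rewrite mulnC leq_divM.
have h2 : (t.*2 <= N)%N by rewrite -muln2; lia.
have h3 : \sum_(j < t.*2) g j <= \sum_(j < N) g j.
  rewrite (big_ord_widen _ _ h2) big_mkcond /=; apply: ler_sum => j _.
  by case: ifP => // _; rewrite /g ler0n.
apply: le_trans h3.
elim: t ht {h2} => [|t IH] ht; first by rewrite big_ord0.
rewrite doubleS !big_ord_recr /=.
have -> : (t.+1)%:Z = t%:Z + 1 by rewrite -addn1 PoszD.
rewrite -addrA lerD //; first by apply: IH; lia.
rewrite /g.
have a1 : (3 * t.*2 <= m)%N by rewrite -muln2; lia.
have a2 : (3 * t.*2.+1 <= m)%N by rewrite -muln2; lia.
rewrite a1 a2 /=.
have : odd (m - 3 * t.*2) = ~~ odd (m - 3 * t.*2.+1).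
  have -> : (m - 3 * t.*2 = (m - 3 * t.*2.+1) + 3)%N by rewrite -muln2; lia.
  by rewrite oddD /= addbT.
by move=> ->; case: (odd _).
Qed.

Lemma mul_good_ge N Y G m : (m < N)%N -> nn N Y -> good N G -> Y`_m <= (Y * G)`_m.
Proof.
move=> hm hY [g0 g1]; rewrite coefM big_ord_recr /= subnn g0 mulr1 lerDr.
rewrite sumr_ge0 // => j _; rewrite mulr_ge0 //.
  by apply: hY; apply: (ltn_trans _ hm).
by apply: g1; apply: leq_ltn_trans hm; rewrite leq_subr.
Qed.

Theorem mainTheorem5 (n : nat) (hn : (1 <= n)%N) :
  ((2 * ((n - 1) %/ 6))%N)%:Z <= bprime n.
Proof.
case: n hn => // m _.
set N := m.+2.
have N0 : (0 < N)%N by [].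
rewrite /bprime /Jab_inv_tr.
have -> : (10 - 2 = 8)%N by []. have -> : (10 - 3 = 7)%N by [].
set J := J_tr N 10.
set p2 := poch_inv_tr N 2 10. set p3 := poch_inv_tr N 3 10.
set p7 := poch_inv_tr N 7 10. set p8 := poch_inv_tr N 8 10.
set p10 := poch_inv_tr N 10 10.
pose W : {poly int} := \prod_(i < N) (1 - 'X^((10 + 10 * i) * N)).
have hW : J * p10 = W.
  rewrite /J /J_tr /poch_tr /p10 /poch_inv_tr /W -big_split /=.
  apply: eq_bigr => i _.
  rewrite (eq_bigr (fun j : 'I_N => ('X^(10 + 10 * i)) ^+ j)) => [|j _]; last by rewrite exprM.
  by rewrite geo exprM.
have gW : good N W by apply: good_prod => i _; apply: W_good.
pose U2 := \prod_(j < N.*2) S N (2 + 5 * j).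
pose U3 := \prod_(j < N.*2) S N (3 + 5 * j).
have hU2 : p2 * p7 = U2 := merge_prod _ (S N) 2 N.
have hU3 : p3 * p8 = U3 := merge_prod _ (S N) 3 N.
pose A1 := \prod_(j < N) S N (2 + 5 * j).
pose A3 := \prod_(j < N) S N (3 + 5 * j).
pose B2 := \prod_(j < N) S N (2 + 5 * j.+1).
pose B3 := \prod_(j < N) S N (3 + 5 * j.+1).
have [R1 gR1 hU2a] : exists2 R, good N R & U2 = A1 * R.
  eexists; last exact: (split_a _ (fun j => S N (2 + 5 * j)) N).
  by apply: good_prod => j _; apply: S_good.
have [R2 gR2 hU2b] : exists2 R, good N R & U2 = S N 2 * B2 * R.
  eexists; last exact: (@split_b _ (fun j => S N (2 + 5 * j)) N N0).
  by apply: good_prod => j _; apply: S_good.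
have [R3 gR3 hU3a] : exists2 R, good N R & U3 = A3 * R.
  eexists; last exact: (split_a _ (fun j => S N (3 + 5 * j)) N).
  by apply: good_prod => j _; apply: S_good.
have [R4 gR4 hU3b] : exists2 R, good N R & U3 = S N 3 * B3 * R.
  eexists; last exact: (@split_b _ (fun j => S N (3 + 5 * j)) N N0).
  by apply: good_prod => j _; apply: S_good.
pose T1 : {poly int} := \prod_(j < N) ((1 - 'X^(10 + 10 * j)) * (S N (2 + 5 * j) * S N (3 + 5 * j.+1))).
pose T2 : {poly int} := \prod_(j < N) ((1 - 'X^(10 + 10 * j)) * (S N (3 + 5 * j) * S N (2 + 5 * j.+1))).
have hT1 : J * A1 * B3 = T1.
  by rewrite /J /J_tr /poch_tr /A1 /B3 /T1 -!big_split /=; apply: eq_bigr => j _; ring.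
have hT2 : J * A3 * B2 = T2.
  by rewrite /J /J_tr /poch_tr /A3 /B2 /T2 -!big_split /=; apply: eq_bigr => j _; ring.
have gT1 : good N T1.
  apply: good_prod => j _.
  have -> : (10 + 10 * j = (2 + 5 * j) + (3 + 5 * j.+1))%N by lia.
  by apply: T_good.
have gT2 : good N T2.
  apply: good_prod => j _.
  have -> : (10 + 10 * j = (3 + 5 * j) + (2 + 5 * j.+1))%N by lia.
  by apply: T_good.
pose G : {poly int} := W ^+ 4 * T1 * T2 * R1 * R2 * R3 * R4.
have gG : good N G.
  by do 6! (apply: goodM => //); apply: goodX.
have key : 2%:P * 'X * J ^+ 6 * (p2 * p8 * p10) ^+ 2 * (p3 * p7 * p10) ^+ 2
    = 2%:P * ('X * ((S N 2 * S N 3) * G)).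
  transitivity (2%:P * 'X * (J * p10) ^+ 4 * J ^+ 2 * (p2 * p7) * (p2 * p7) * (p3 * p8) * (p3 * p8)).
    ring.
  rewrite hW hU2 hU3 {1}hU2a hU2b {1}hU3a hU3b /G -hT1 -hT2; ring.
rewrite key coefCM coefXM /= subn1 /= PoszM.
apply: ler_wpM2l => //.
apply: le_trans (S23_bound N m _) _; first by rewrite /N; lia.
apply: (mul_good_ge N) => //; last by apply: nnM; apply: S_nn.
Qed.
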